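(* Let $T$ be a tree, $(X_\gamma)_{\gamma\in\Gamma_T}$ a $\mathbf{P}_t$-chain on $T$, $s>0$, and let $x_1,\dots,x_m$ be distinct points of $\Gamma_T$ each at distance exactly $s$ from the root. For $i\in\mathcal{S}$ let $S_i=|\{r:X_{x_r}=i\}|$. Then $\mathbb{E}^i[S_i]=p_{ii}(s)m$ and for every $\delta>0$, $$\mathbb{P}^i\big[|S_i-\mathbb{E}^i[S_i]|>\delta m\big]\le\frac{1-e^{-q_is}}{\delta^2}.$$
   Context: A tree $T=(V,E,\rho,\ell)$ is a finite rooted tree with positive edge lengths, viewed as a metric object with point set $\Gamma_T$; distance from the root to a point is the length of the path from $\rho$. Markov process on countable $\mathcal{S}$ with transition matrices $\mathbf{P}_t=(p_{ij}(t))$ and stable conservative $Q$-matrix, $q_i=-q_{ii}=\sum_{j\ne i}q_{ij}<\infty$. A $\mathbf{P}_t$-chain on $T$: root state $X_\rho$, then along each edge $(u,v)$ run the chain from $X_u$ for time $\ell_{(u,v)}$, independently on outgoing edges given the branching state, $X_\gamma$ being the state at point $\gamma$; $\mathbb{P}^i,\mathbb{E}^i$ refer to root state $i$. *)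

(* Defs.v *)
From mathcomp Require Import all_boot.
From Stdlib Require Import Reals.

Set Implicit Arguments.
Unset Strict Implicit.
Unset Printing Implicit Defensive.

Definition Rleb (x y : R) : bool := if Rle_dec x y then true else false.
Definition Rltb (x y : R) : bool := if Rlt_dec x y then true else false.
Definition Reqb (x y : R) : bool := if Req_EM_T x y then true else false.

Definition kron (i j : nat) : R := if i == j then 1%R else 0%R.

Definition is_transition_function (p : nat -> nat -> R -> R) : Prop :=
  (forall i j t, (0 <= t)%R -> (0 <= p i j t)%R) /\
  (forall i t, (0 <= t)%R -> infinite_sum (fun j => p i j t) 1%R) /\
  (forall i j, p i j 0%R = kron i j) /\
  (forall i j s t, (0 <= s)%R -> (0 <= t)%R ->
      infinite_sum (fun k => (p i k s * p k j t)%R) (p i j (s + t)%R)).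

Definition is_Q_matrix_of (p : nat -> nat -> R -> R) (q : nat -> nat -> R) : Prop :=
  forall i j, forall eps : R, (0 < eps)%R -> exists delta : R, (0 < delta)%R /\
    forall h : R, (0 < h)%R -> (h < delta)%R ->
      (Rabs ((p i j h - kron i j) / h - q i j) < eps)%R.

(* stable (q_i finite: automatic, q is real-valued) and conservative:
   q_i = - q_ii = sum_{j <> i} q_ij *)
Definition stable_conservative (q : nat -> nat -> R) : Prop :=
  forall i, infinite_sum (fun j => if j == i then 0%R else q i j) (- q i i)%R.

(* Vertices V; every non-root vertex v has the edge (par v, v) of length len v. *)
Record tree (V : finType) := Tree {
  troot : V;
  tpar : V -> V;
  tlen : V -> R;
  tpar_root : tpar troot = troot;
  treach : forall v, iter #|V| tpar v = troot;
  tlen_pos : forall v, v <> troot -> (0 < tlen v)%R }.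

Section TreeDefs.
Variables (V : finType) (T : tree V).

Definition vdepth (v : V) : R :=
  \big[Rplus/0%R]_(k < #|V|)
     (if iter k (tpar T) v == troot T then 0%R else tlen T (iter k (tpar T) v)).

(* A point of Gamma_T is encoded as (v, t): the root is (troot, 0); otherwise
   v <> troot and 0 < t <= len v, the point of the edge (par v, v) at distance
   t from par v (t = len v is the vertex v itself).  Encoding is unique. *)
Definition valid_point (x : V * R) : Prop :=
  (x.1 = troot T /\ x.2 = 0%R) \/
  (x.1 <> troot T /\ (0 < x.2)%R /\ (x.2 <= tlen T x.1)%R).

Definition pdist (x : V * R) : R :=
  if x.1 == troot T then 0%R else (vdepth (tpar T x.1) + x.2)%R.

Definition pt_eqb (x y : V * R) : bool := (x.1 == y.1) && Reqb x.2 y.2.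

Definition anc (x y : V * R) : bool :=
  (x.1 == troot T) || ((x.1 == y.1) && Rleb x.2 y.2) ||
  [exists k : 'I_#|V|, (0 < k) && (iter k (tpar T) y.1 == x.1)].

Variable (m : nat) (x : 'I_m -> V * R).

Definition FP := (V + 'I_m)%type.

Definition fpt (a : FP) : V * R :=
  match a with
  | inl v => if v == troot T then (troot T, 0%R) else (v, tlen T v)
  | inr r => x r
  end.

Definition tiebreak (a b : FP) : bool :=
  match a, b with inl _, inr _ => true | _, _ => false end.

(* strict tree order on F (coinciding points: vertex before x_r) *)
Definition fprec (a b : FP) : bool :=
  anc (fpt a) (fpt b) && (~~ pt_eqb (fpt a) (fpt b) || tiebreak a b).

Definition fparent (a b : FP) : bool :=
  fprec a b && [forall c : FP, ~~ (fprec a c && fprec c b)].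

(* Joint weight of a state configuration c on F for a P_t-chain on T:
   product over edges (a,b) of the induced tree of p_{c a, c b}(d b - d a). *)
Definition chain_weight (p : nat -> nat -> R -> R) (c : FP -> nat) : R :=
  \big[Rmult/1%R]_(ab : FP * FP | fparent ab.1 ab.2)
     p (c ab.1) (c ab.2) (pdist (fpt ab.2) - pdist (fpt ab.1))%R.

(* Partial sum (states truncated to {0..N-1}) of E^i[ f(X_{x_1},...,X_{x_m}) ]. *)
Definition chain_psum (p : nat -> nat -> R -> R) (i N : nat)
    (f : ('I_m -> nat) -> R) : R :=
  \big[Rplus/0%R]_(c : {ffun FP -> 'I_N} | nat_of_ord (c (inl (troot T))) == i)
     (chain_weight p (fun a => nat_of_ord (c a)) *
      f (fun r => nat_of_ord (c (inr r))))%R.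

(* For f >= 0: E^i[f(X_{x_1},...,X_{x_m})] = v  (sum of nonnegative series) *)
Definition chain_expect_is (p : nat -> nat -> R -> R) (i : nat)
    (f : ('I_m -> nat) -> R) (v : R) : Prop :=
  is_lub (fun y => exists N, y = chain_psum p i N f) v.

End TreeDefs.

Definition count_state (m i : nat) (y : 'I_m -> nat) : nat :=
  #|[pred r : 'I_m | y r == i]|.

Definition indicR (P : Prop) (d : {P} + {~ P}) : R := if d then 1%R else 0%R.

(* Main.v *)
Require Import Defs.
From mathcomp Require Import all_boot.
From Stdlib Require Import Reals Lra Lia IndefiniteDescription.
From HB Require Import structures.
Set Warnings "-notation-overridden -redundant-canonical-projection".
Set Implicit Arguments.
Unset Strict Implicit.
Unset Printing Implicit Defensive.

Lemma RplusA' : associative Rplus. Proof. by move=> a b c; rewrite Rplus_assoc. Qed.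
Lemma RmultA' : associative Rmult. Proof. by move=> a b c; rewrite Rmult_assoc. Qed.
HB.instance Definition _ := Monoid.isComLaw.Build R 0%R Rplus RplusA' Rplus_comm Rplus_0_l.
HB.instance Definition _ := Monoid.isComLaw.Build R 1%R Rmult RmultA' Rmult_comm Rmult_1_l.
HB.instance Definition _ := Monoid.isMulLaw.Build R 0%R Rmult Rmult_0_l Rmult_0_r.
HB.instance Definition _ := Monoid.isAddLaw.Build R Rmult Rplus Rmult_plus_distr_r Rmult_plus_distr_l.

Open Scope R_scope.
Section SumR.
Variable I : Type.

Lemma sumR_ge0 (r : seq I) (P : pred I) (F : I -> R) :
  (forall k, P k -> 0 <= F k) -> 0 <= \big[Rplus/0]_(k <- r | P k) F k.
Proof. move=> H; apply: (big_ind (fun x => 0 <= x)) => //; [lra | move=> a b; lra]. Qed.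

Lemma prodR_ge0 (r : seq I) (P : pred I) (F : I -> R) :
  (forall k, P k -> 0 <= F k) -> 0 <= \big[Rmult/1]_(k <- r | P k) F k.
Proof. move=> H; apply: (big_ind (fun x => 0 <= x)) => //; [lra | move=> a b; nra]. Qed.

Lemma sumR_le (r : seq I) (P : pred I) (F G : I -> R) :
  (forall k, P k -> F k <= G k) ->
  \big[Rplus/0]_(k <- r | P k) F k <= \big[Rplus/0]_(k <- r | P k) G k.
Proof. move=> H; apply: (big_ind2 (fun x y => x <= y)) => //; [lra | move=> a b c d; lra]. Qed.

Lemma sumR_sub (r : seq I) (P Q : pred I) (F : I -> R) :
  (forall k, Q k -> 0 <= F k) -> (forall k, P k -> Q k) ->
  \big[Rplus/0]_(k <- r | P k) F k <= \big[Rplus/0]_(k <- r | Q k) F k.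
Proof.
move=> H0 HPQ; rewrite (big_mkcond P) (big_mkcond Q); apply: sumR_le => k _.
case: (boolP (P k)) => Pk; first by rewrite (HPQ _ Pk); lra.
by case: ifP => Qk; [apply: H0 | lra].
Qed.
End SumR.

Lemma sum_f_R0_big (f : nat -> R) n : sum_f_R0 f n = \big[Rplus/0]_(k < n.+1) f k.
Proof. elim: n => [|n IH]; first by rewrite big_ord_recr big_ord0 /=; lra.
by rewrite /= IH [in RHS]big_ord_recr. Qed.

Lemma inf_sum_le (f : nat -> R) l : infinite_sum f l -> (forall k, 0 <= f k) ->
  forall n, \big[Rplus/0]_(k < n) f k <= l.
Proof.
move=> Hl H0.
have G : Un_growing (sum_f_R0 f) by move=> k /=; have := H0 k.+1; lra.
have Hb : forall n, sum_f_R0 f n <= l by move=> n; apply: growing_ineq.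
case=> [|n]; last by rewrite -sum_f_R0_big.
rewrite big_ord0; have := Hb O; have := H0 O; rewrite /=; lra.
Qed.

Lemma inf_sum_lim (f : nat -> R) l : infinite_sum f l -> forall e, 0 < e ->
  exists N0 : nat, forall n : nat, (N0 <= n)%nat -> l - e <= \big[Rplus/0]_(k < n) f k.
Proof.
move=> Hl e He; have [N HN] := Hl e He; exists N.+1 => n Hn.
case: n Hn => // n Hn; rewrite -sum_f_R0_big.
have := HN n; rewrite /R_dist => H; have {H}:= H (ltac:(apply/leP; exact Hn)).
move/Rabs_def2 => [_ H]; lra.
Qed.
Section Abs.
Variables (A : finType) (rho : A) (pi : A -> A) (rank : A -> nat).
Hypothesis Hpirho : pi rho = rho.
Hypothesis Hrank : forall b, b != rho -> (rank (pi b) < rank b)%nat.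
Variables (p : nat -> nat -> R -> R) (d : A -> R).
Hypothesis p0 : forall j k t, 0 <= t -> 0 <= p j k t.
Hypothesis Hd : forall b, b != rho -> d (pi b) <= d b.
Definition K b j k := p j k (d b - d (pi b)).
Variables (i N : nat) (o : 'I_N).

Definition upd (c : {ffun A -> 'I_N}) (l : A) (k : 'I_N) : {ffun A -> 'I_N} :=
  [ffun a => if a == l then k else c a].

Definition inbox (U : {set A}) (B : A -> nat) (c : {ffun A -> 'I_N}) : bool :=
  [&& (nat_of_ord (c rho) == i), [forall a, (a \in U) ==> (c a < B a)%nat]
    & [forall a, (a \notin U) ==> (c a == o)]].

Definition W (U : {set A}) (c : {ffun A -> 'I_N}) :=
  \big[Rmult/1]_(b | (b \in U) && (b != rho)) K b (c (pi b)) (c b).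

Definition Sig U B (phi : {ffun A -> 'I_N} -> R) :=
  \big[Rplus/0]_(c | inbox U B c) (W U c * phi c).

Lemma K_ge0 b j k : b != rho -> 0 <= K b j k.
Proof. by move=> br; apply: p0; have := Hd br; lra. Qed.

Lemma W_ge0 (U : {set A}) c : 0 <= W U c.
Proof. by apply: prodR_ge0 => b /andP[_ br]; apply: K_ge0. Qed.

Lemma Sig_le (U : {set A}) B phi psi : (forall c, inbox U B c -> phi c <= psi c) ->
  Sig U B phi <= Sig U B psi.
Proof.
move=> H; apply: sumR_le => c Hc; apply: Rmult_le_compat_l; [exact: W_ge0 | exact: H].
Qed.

Lemma Sig_scale (U : {set A}) B a phi : Sig U B (fun c => a * phi c) = a * Sig U B phi.
Proof. rewrite /Sig big_distrr; apply: eq_bigr => c _ /=; ring. Qed.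

Lemma pi_neq b : b != rho -> pi b != b.
Proof. by move/Hrank => H; apply/eqP => E; rewrite E ltnn in H. Qed.

Lemma upd_same c l k : upd c l k l = k.
Proof. by rewrite /upd ffunE eqxx. Qed.
Lemma upd_other c l k a : a != l -> upd c l k a = c a.
Proof. by move=> al; rewrite /upd ffunE (negbTE al). Qed.

Lemma upd_upd_eq c l k : (upd (upd c l k) l o == c) = (c l == o).
Proof.
apply/eqP/eqP => [<- | E]; first by rewrite upd_same.
apply/ffunP => a; rewrite /upd !ffunE; case: eqP => [->|//]; by rewrite E.
Qed.

Lemma peel (U : {set A}) (B : A -> nat) (phi : {ffun A -> 'I_N} -> R) l : l \in U -> l != rho ->
  (forall b, b \in U -> b != rho -> pi b != l) ->
  Sig U B phi = Sig (U :\ l) B (fun c => \big[Rplus/0]_(k : 'I_N | (k < B l)%nat)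
                                          (K l (c (pi l)) k * phi (upd c l k))).
Proof.
move=> lU lr Hleaf.
have Wupd c k : W U (upd c l k) = W (U :\ l) c * K l (c (pi l)) k.
  rewrite /W (bigD1 l) /=; last by rewrite lU lr.
  rewrite Rmult_comm; congr Rmult.
    apply: eq_big => b; first by rewrite in_setD1; case: (b \in U); case: (b != rho); case: (b != l).
    move=> /andP[/andP[bU br] bl]; rewrite !upd_other //; exact: Hleaf.
  by rewrite upd_same upd_other // pi_neq.
rewrite /Sig.
under [RHS]eq_bigr do rewrite big_distrr /=.
rewrite pair_big_dep /=.
rewrite (reindex_onto (fun ck : {ffun A -> 'I_N} * 'I_N => upd ck.1 l ck.2)
                      (fun c => (upd c l o, c l))); last first.
  by move=> c _; apply/ffunP => a; rewrite /upd !ffunE; case: eqP => [->|].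
have rl : rho != l by rewrite eq_sym.
apply: eq_big.
  case=> c k /=; have -> : upd c l k l = k by exact: upd_same.
  rewrite xpair_eqE eqxx andbT upd_upd_eq /inbox upd_other //.
  case: (nat_of_ord (c rho) == i); rewrite //=.
  apply/idP/idP.
    case/andP=> /andP[/forallP Hb /forallP Ho] Hl.
    apply/andP; split; [apply/andP; split|].
      apply/forallP => a; apply/implyP; rewrite in_setD1 => /andP[al aU].
      by have := implyP (Hb a) aU; rewrite upd_other.
    apply/forallP => a; apply/implyP; rewrite in_setD1 negb_and negbK.
    case/orP => [/eqP -> //|aU]; by have := implyP (Ho a) aU; rewrite upd_other //; apply/eqP => E; move: aU; rewrite E lU.
    by have := implyP (Hb l) lU; rewrite upd_same.
  case/andP=> /andP[/forallP Hb /forallP Ho] Hk.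
  have Hl : c l == o by have := implyP (Ho l); rewrite in_setD1 eqxx /=; apply.
  rewrite Hl andbT; apply/andP; split.
    apply/forallP => a; apply/implyP => aU; case: (eqVneq a l) => [->|al]; first by rewrite upd_same.
    by rewrite upd_other //; apply: (implyP (Hb a)); rewrite in_setD1 al.
  apply/forallP => a; apply/implyP => aU; have al : a != l by apply/eqP => E; move: aU; rewrite E lU.
  by rewrite upd_other //; apply: (implyP (Ho a)); rewrite in_setD1 negb_and aU orbT.
case=> c k /= _; rewrite Wupd; ring.
Qed.


Definition closedU (U : {set A}) := forall b, b \in U -> pi b \in U.

Lemma leaf_ex (U : {set A}) : rho \in U -> U != [set rho] ->
  exists l, [/\ l \in U, l != rho & forall b, b \in U -> b != rho -> pi b != l].
Proof.
move=> rU UnR.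
have [a0 Ha0] : exists a0, a0 \in U :\ rho.
  apply/existsP; apply: contraR UnR => /existsPn H; apply/eqP/setP => a.
  rewrite in_set1; case: (eqVneq a rho) => [->|ar]; first by rewrite rU.
  by have := H a; rewrite in_setD1 ar /= => /negbTE.
case: (@arg_maxnP A a0 (mem (U :\ rho)) rank Ha0) => l Hl Hmax.
move: Hl; rewrite inE in_setD1 => /andP[lr lU]; exists l; split => // b bU br.
apply/eqP => E; have := Hrank br; rewrite E => Hlt.
have := Hmax b; rewrite inE in_setD1 br bU => /(_ isT) Hle.
by move: (leq_trans Hlt Hle); rewrite ltnn.
Qed.

Lemma closed_D1 (U : {set A}) l : closedU U -> l != rho ->
  (forall b, b \in U -> b != rho -> pi b != l) -> closedU (U :\ l).
Proof.
move=> cU lr Hleaf b; rewrite in_setD1 => /andP[bl bU]; rewrite in_setD1 (cU _ bU) andbT.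
case: (eqVneq b rho) => [->|br]; first by rewrite Hpirho eq_sym.
exact: Hleaf.
Qed.

Lemma W_rho c : W [set rho] c = 1.
Proof. by rewrite /W big_pred0 // => b; rewrite in_set1; case: eqP. Qed.

Lemma inbox_rho_uniq B (c c' : {ffun A -> 'I_N}) : inbox [set rho] B c -> inbox [set rho] B c' -> c = c'.
Proof.
case/and3P => /eqP Hi _ /forallP Ho; case/and3P => /eqP Hi' _ /forallP Ho'.
apply/ffunP => a; case: (eqVneq a rho) => [->|ar]; first by apply: val_inj; rewrite /= Hi Hi'.
have aU : a \notin [set rho] by rewrite in_set1.
by rewrite (eqP (implyP (Ho a) aU)) (eqP (implyP (Ho' a) aU)).
Qed.

Lemma base_le B (phi : {ffun A -> 'I_N} -> R) v : (forall c : {ffun A -> 'I_N}, nat_of_ord (c rho) = i -> 0 <= phi c <= v) -> 0 <= v ->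
  Sig [set rho] B phi <= v.
Proof.
move=> H v0; rewrite /Sig; case: (pickP (inbox [set rho] B)) => [c Pc | P0].
  rewrite (big_pred1 c); last first.
    move=> c' /=; apply/idP/idP => [Pc'|/eqP ->//]; apply/eqP; exact: (inbox_rho_uniq Pc' Pc).
  rewrite W_rho; have := H c; case/and3P: Pc => /eqP Hi _ _ => /(_ Hi); lra.
by rewrite big_pred0.
Qed.

Lemma base_ge B (phi : {ffun A -> 'I_N} -> R) v : (i < N)%nat -> (i < B rho)%nat ->
  (forall c : {ffun A -> 'I_N}, nat_of_ord (c rho) = i -> v <= phi c) -> v <= Sig [set rho] B phi.
Proof.
move=> iN iB H; pose c0 := [ffun a => if a == rho then Ordinal iN else o].
have Pc0 : inbox [set rho] B c0.
  apply/and3P; split; first by rewrite /c0 ffunE eqxx.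
    apply/forallP => a; apply/implyP; rewrite in_set1 => /eqP ->; by rewrite /c0 ffunE eqxx.
  apply/forallP => a; apply/implyP; rewrite in_set1 => ar; by rewrite /c0 ffunE (negbTE ar).
rewrite /Sig (big_pred1 c0); last first.
  move=> c' /=; apply/idP/idP => [Pc'|/eqP ->//]; apply/eqP; exact: (inbox_rho_uniq Pc' Pc0).
by rewrite W_rho Rmult_1_l; apply: H; rewrite /c0 ffunE eqxx.
Qed.

Hypothesis psum1 : forall j t n, 0 <= t -> \big[Rplus/0]_(k < n) p j k t <= 1.

Lemma Kpart b j (P : pred 'I_N) : b != rho -> \big[Rplus/0]_(k : 'I_N | P k) K b j k <= 1.
Proof.
move=> br; have H0 : 0 <= d b - d (pi b) by have := Hd br; lra.
apply: Rle_trans (psum1 j N H0).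
by apply: sumR_sub => // k _; apply: K_ge0.
Qed.

Lemma mass_le n (U : {set A}) B : (#|U| <= n)%nat -> rho \in U -> closedU U ->
  Sig U B (fun _ => 1) <= 1.
Proof.
elim: n U => [|n IH] U Hn rU cU.
  by move: Hn; rewrite leqn0 => /eqP/cards0_eq E; move: rU; rewrite E inE.
case: (eqVneq U [set rho]) => [->|UnR].
  by apply: base_le => [c _|]; lra.
have [l [lU lr Hleaf]] := leaf_ex rU UnR.
rewrite (peel _ _ lU lr Hleaf).
apply: (Rle_trans _ (Sig (U :\ l) B (fun _ => 1))); last first.
  apply: IH.
  - by move: Hn; rewrite (cardsD1 l U) lU.
  - by rewrite in_setD1 rU eq_sym lr.
  - exact: closed_D1.
apply: Sig_le => c _.
rewrite (eq_bigr (fun k : 'I_N => K l (c (pi l)) k)); first exact: Kpart.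
by move=> k _; ring.
Qed.

Hypothesis dr0 : d rho = 0.
Hypothesis CKp : forall a b s t n, 0 <= s -> 0 <= t ->
  \big[Rplus/0]_(k < n) (p a k s * p k b t) <= p a b (s + t).

Lemma marg_le n (U : {set A}) B z j0 t : (#|U| <= n)%nat -> rho \in U -> closedU U ->
  z \in U -> 0 <= t ->
  Sig U B (fun c => p (c z) j0 t) <= p i j0 (d z + t).
Proof.
elim: n U z t => [|n IH] U z t Hn rU cU zU t0.
  by move: Hn; rewrite leqn0 => /eqP/cards0_eq E; move: rU; rewrite E inE.
case: (eqVneq U [set rho]) => [UE|UnR].
  move: zU; rewrite UE in_set1 => /eqP ->.
  apply: base_le => [c Hc|]; last by apply: p0; lra.
  rewrite Hc dr0 Rplus_0_l; split; [apply: p0; lra | lra].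
have [l [lU lr Hleaf]] := leaf_ex rU UnR.
have Hn' : (#|U :\ l| <= n)%nat by move: Hn; rewrite (cardsD1 l U) lU.
have rU' : rho \in U :\ l by rewrite in_setD1 rU eq_sym lr.
have cU' := closed_D1 cU lr Hleaf.
rewrite (peel _ _ lU lr Hleaf).
case: (eqVneq l z) => [lz|lz].
  subst l.
  have Hdz : 0 <= d z - d (pi z) by have := Hd lr; lra.
  apply: (Rle_trans _ (Sig (U :\ z) B (fun c => p (c (pi z)) j0 (d z - d (pi z) + t)))).
    apply: Sig_le => c _.
    rewrite (eq_bigr (fun k : 'I_N => p (c (pi z)) k (d z - d (pi z)) * p k j0 t)); last first.
      by move=> k _; rewrite upd_same.
    apply: (Rle_trans _ (\big[Rplus/0]_(k < N) (p (c (pi z)) k (d z - d (pi z)) * p k j0 t))).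
      apply: sumR_sub => // k _; apply: Rmult_le_pos; apply: p0; lra.
    exact: CKp.
  have -> : d z + t = d (pi z) + (d z - d (pi z) + t) by ring.
  apply: IH => //; last by lra.
  by rewrite in_setD1 pi_neq // cU.
apply: (Rle_trans _ (Sig (U :\ l) B (fun c => p (c z) j0 t))); last first.
  by apply: IH => //; rewrite in_setD1 eq_sym lz.
apply: Sig_le => c _.
rewrite (eq_bigr (fun k : 'I_N => K l (c (pi l)) k * p (c z) j0 t)); last first.
  by move=> k _; rewrite upd_other // eq_sym.
rewrite -big_distrl /=.
rewrite -[X in _ <= X]Rmult_1_l; apply: Rmult_le_compat_r; first exact: p0.
exact: Kpart.
Qed.

Lemma mass_ge n (U : {set A}) B e : (#|U| <= n)%nat -> rho \in U -> closedU U ->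
  0 <= e <= 1 -> (i < N)%nat -> (i < B rho)%nat ->
  (forall b, b != rho -> forall j, (j < B (pi b))%nat ->
      1 - e <= \big[Rplus/0]_(k : 'I_N | (k < B b)%nat) K b j k) ->
  (1 - e) ^ (#|U| - 1) <= Sig U B (fun _ => 1).
Proof.
move=> + + + e01 iN iB HB.
elim: n U => [|n IH] U Hn rU cU.
  by move: Hn; rewrite leqn0 => /eqP/cards0_eq E; move: rU; rewrite E inE.
case: (eqVneq U [set rho]) => [->|UnR].
  by rewrite cards1 /=; apply: base_ge => // c _; lra.
have [l [lU lr Hleaf]] := leaf_ex rU UnR.
have Hn' : (#|U :\ l| <= n)%nat by move: Hn; rewrite (cardsD1 l U) lU.
have rU' : rho \in U :\ l by rewrite in_setD1 rU eq_sym lr.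
have cU' := closed_D1 cU lr Hleaf.
have piU' : pi l \in U :\ l by rewrite in_setD1 pi_neq // cU.
rewrite (peel _ _ lU lr Hleaf).
apply: (Rle_trans _ (Sig (U :\ l) B (fun _ => (1 - e) * 1))); last first.
  apply: Sig_le => c /and3P[_ /forallP Hb _].
  have Hc := implyP (Hb (pi l)) piU'.
  rewrite (eq_bigr (fun k : 'I_N => K l (c (pi l)) k)); last by move=> k _; ring.
  rewrite Rmult_1_r; exact: HB.
rewrite Sig_scale.
have Hcard : (#|U| - 1 = (#|U :\ l| - 1).+1)%nat.
  have : (0 < #|U :\ l|)%nat by rewrite card_gt0; apply/set0Pn; exists rho.
  by move=> H; rewrite (cardsD1 l U) lU add1n !subn1 /= prednK.
rewrite Hcard /=; apply: Rmult_le_compat_l; first lra.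
exact: IH.
Qed.
End Abs.
Section Tree.
Variables (V : finType) (T : tree V).
Local Notation root := (troot T).
Local Notation par := (tpar T).

Lemma iter_root n : iter n par root = root.
Proof. by elim: n => //= n ->; rewrite tpar_root. Qed.

Lemma iter_big n v : (#|V| <= n)%nat -> iter n par v = root.
Proof. by move=> H; rewrite -(subnK H) iterD treach iter_root. Qed.

Lemma iter_cycle k v : (0 < k)%nat -> iter k par v = v -> v = root.
Proof.
move=> k0 E.
have Hm : forall j, iter (j * k) par v = v.
  by elim=> [//|j IH]; rewrite mulSn iterD IH E.
rewrite -(Hm #|V|); apply: iter_big.
by rewrite -{1}(muln1 #|V|) leq_mul2l k0 orbT.
Qed.

Definition fdep (w : V) : R := if w == root then 0 else tlen T w.

Lemma fdep_ge0 w : 0 <= fdep w.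
Proof. rewrite /fdep; case: eqP => [_|wr]; first lra. by apply: Rlt_le; apply: tlen_pos. Qed.

Lemma card_pos : (0 < #|V|)%nat.
Proof. by apply/card_gt0P; exists root. Qed.

Lemma vdepth_rec v : vdepth T v = fdep v + vdepth T (par v).
Proof.
rewrite /vdepth; have := card_pos; case: #|V| (@iter_big) => // n Hb _.
rewrite big_ord_recl [in RHS]big_ord_recr /=.
have -> : iter n par (par v) = root by rewrite -iterSr; apply: Hb.
rewrite eqxx Rplus_0_r; congr Rplus.
apply: eq_bigr => k _; by rewrite /bump /= -iterSr.
Qed.

Lemma vdepth_ge0 v : 0 <= vdepth T v.
Proof. by apply: sumR_ge0 => k _; have := fdep_ge0 (iter k par v); rewrite /fdep. Qed.

Lemma vdepth_par v : vdepth T (par v) <= vdepth T v.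
Proof. by rewrite (vdepth_rec v); have := fdep_ge0 v; lra. Qed.

Lemma vdepth_iter k v : vdepth T (iter k par v) <= vdepth T v.
Proof.
elim: k => [|k IH] /=; first lra.
by apply: Rle_trans IH; apply: vdepth_par.
Qed.
End Tree.
Lemma RlebP a b : reflect (a <= b) (Rleb a b).
Proof. by rewrite /Rleb; case: Rle_dec => H; constructor. Qed.
Lemma ReqbP a b : reflect (a = b) (Reqb a b).
Proof. by rewrite /Reqb; case: Req_EM_T => H; constructor. Qed.

Section Anc.
Variables (V : finType) (T : tree V).
Local Notation root := (troot T).
Local Notation par := (tpar T).

Lemma pt_eqbP (X Y : V * R) : reflect (X = Y) (pt_eqb X Y).
Proof.
case: X Y => [a b] [c e]; rewrite /pt_eqb /=.
apply: (iffP andP) => [[/eqP -> /ReqbP ->]//|[-> ->]]; split; [exact: eqxx | by apply/ReqbP].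
Qed.

Definition ancP (X Y : V * R) : Prop :=
  X.1 = root \/ (X.1 = Y.1 /\ X.2 <= Y.2) \/ (exists k, (0 < k)%nat /\ iter k par Y.1 = X.1).

Lemma ancE X Y : anc T X Y <-> ancP X Y.
Proof.
rewrite /anc /ancP; split.
  case/orP => [/orP[/eqP H | /andP[/eqP H1 /RlebP H2]] | /existsP[k /andP[k0 /eqP Hk]]].
  - by left.
  - by right; left.
  - by right; right; exists k.
case=> [H | [[H1 H2] | [k [k0 Hk]]]].
- by rewrite H eqxx.
- by rewrite H1 eqxx; apply/orP; left; apply/orP; right; apply/RlebP.
case: (ltnP k #|V|) => kV.
  apply/orP; right; apply/existsP; exists (Ordinal kV); by rewrite /= k0 Hk eqxx.
by rewrite -Hk iter_big // eqxx.
Qed.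

Lemma valid_root X : valid_point T X -> X.1 = root -> X = (root, 0).
Proof. case: X => a b /= [[/= -> ->] //| [/= H _] E]; by case: H. Qed.

Lemma ancP_trans X Y Z : ancP X Y -> ancP Y Z -> ancP X Z.
Proof.
move=> [H1 | [[H1 H2] | [k [k0 Hk]]]]; first by left.
  move=> [G1 | [[G1 G2] | [k' [k0' Hk']]]].
  - by left; rewrite H1.
  - by right; left; split; [rewrite H1 | lra].
  - by right; right; exists k'; rewrite H1.
move=> [G1 | [[G1 G2] | [k' [k0' Hk']]]].
- by left; rewrite -Hk G1 iter_root.
- by right; right; exists k; rewrite -G1.
- right; right; exists (k + k')%nat; split; first by rewrite addn_gt0 k0.
  by rewrite iterD Hk'.
Qed.

Lemma ancP_antisym X Y : valid_point T X -> valid_point T Y -> ancP X Y -> ancP Y X -> X = Y.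
Proof.
move=> vX vY.
case: (eqVneq X.1 root) => [Xr|Xr].
  rewrite (valid_root vX Xr) => _ [G1 | [[G1 G2] | [k [k0 Hk]]]].
  - by rewrite (valid_root vY G1).
  - by rewrite (valid_root vY G1).
  - by rewrite (valid_root vY) // -Hk iter_root.
case: (eqVneq Y.1 root) => [Yr|Yr].
  move=> [H1 | [[H1 H2] | [k [k0 Hk]]]]; first by move/eqP: Xr.
  - by move/eqP: Xr; rewrite H1.
  - by move/eqP: Xr; rewrite -Hk Yr iter_root.
move=> [H1 | [[H1 H2] | [k [k0 Hk]]]]; first by move/eqP: Xr.
  move=> [G1 | [[G1 G2] | [k' [k0' Hk']]]]; first by move/eqP: Yr.
    by case: X Y H1 H2 G1 G2 {vX vY Xr Yr} => a b [c e] /= -> H2 _ G2; congr pair; lra.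
  by case/negP: Xr; apply/eqP; apply: (@iter_cycle _ _ k'); rewrite // Hk' H1.
move=> [G1 | [[G1 G2] | [k' [k0' Hk']]]]; first by move/eqP: Yr.
  by case/negP: Yr; apply/eqP; apply: (@iter_cycle _ _ k); rewrite // Hk G1.
case/negP: Xr; apply/eqP; apply: (@iter_cycle _ _ (k + k')); first by rewrite addn_gt0 k0.
by rewrite iterD Hk' Hk.
Qed.

Lemma ancP_lin X Y Z : ancP X Z -> ancP Y Z -> ancP X Y \/ ancP Y X.
Proof.
case: (eqVneq X.1 root) => [Xr|Xr]; first by left; left.
case: (eqVneq Y.1 root) => [Yr|Yr]; first by right; left.
move=> [H1 | [[H1 H2] | [k [k0 Hk]]]]; first by move/eqP: Xr.
  move=> [G1 | [[G1 G2] | [k' [k0' Hk']]]]; first by move/eqP: Yr.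
    case: (Rle_dec X.2 Y.2) => H.
      by left; right; left; split; [rewrite H1 G1 | ].
    by right; right; left; split; [rewrite H1 G1 | lra].
  by right; right; right; exists k'; rewrite H1.
move=> [G1 | [[G1 G2] | [k' [k0' Hk']]]]; first by move/eqP: Yr.
  by left; right; right; exists k; rewrite G1.
case: (leqP k k') => kk.
  have E : iter (k' - k) par X.1 = Y.1 by rewrite -Hk -iterD subnK.
  case: (posnP (k' - k)) => H0.
    move: E; rewrite H0 /= => E.
    case: (Rle_dec X.2 Y.2) => H.
      by left; right; left.
    by right; right; left; split; [ | lra].
  by right; right; right; exists (k' - k)%nat.
have E : iter (k - k') par Y.1 = X.1 by rewrite -Hk' -iterD subnK // ltnW.
by left; right; right; exists (k - k')%nat; split; [rewrite subn_gt0 |].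
Qed.

Lemma pdist_ge0 Y : valid_point T Y -> 0 <= pdist T Y.
Proof.
rewrite /pdist; case: eqP => [_|Yr]; first lra.
case=> [[/= E _]|[_ [H _]]]; first by case: Yr.
by have := vdepth_ge0 T (par Y.1); lra.
Qed.

Lemma ancP_pdist X Y : valid_point T X -> valid_point T Y -> ancP X Y -> pdist T X <= pdist T Y.
Proof.
move=> vX vY; rewrite {1}/pdist; case: (eqVneq X.1 root) => [Xr|Xr].
  by move=> _; apply: pdist_ge0.
move=> H.
have [Yr Ypos] : Y.1 <> root /\ 0 < Y.2.
  case: vY => [[Y1 _]|[Y1 [Y2 _]]]; last by [].
  case: H => [H | [[H _] | [k [_ Hk]]]]; [by move/eqP: Xr | | ].
  - by move/eqP: Xr; rewrite H Y1.
  - by move/eqP: Xr; rewrite -Hk Y1 iter_root.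
rewrite /pdist (introF eqP Yr).
have [_ [_ Xl]] : X.1 <> root /\ 0 < X.2 /\ X.2 <= tlen T X.1.
  by case: vX => [[H1 _]|//]; move/eqP: Xr.
case: H => [H | [[H1 H2] | [k [k0 Hk]]]]; first by move/eqP: Xr.
  rewrite H1; lra.
have E := vdepth_rec T X.1; rewrite /fdep (negbTE Xr) in E.
have : vdepth T X.1 <= vdepth T (par Y.1).
  rewrite -Hk; case: k k0 {Hk} => // k _; rewrite iterSr; exact: vdepth_iter.
lra.
Qed.
End Anc.
Section FPsec.
Variables (V : finType) (T : tree V) (m : nat) (x : 'I_m -> V * R) (s : R).
Hypotheses (Hs : 0 < s) (Hvalid : forall r, valid_point T (x r))
  (Hinj : injective x) (Hdist : forall r, pdist T (x r) = s).
Local Notation root := (troot T).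
Local Notation pt := (fpt T x).
Local Notation fprec := (fprec T x).
Local Notation fparent := (fparent T x).
Local Notation tiebreak := (@tiebreak V m).

Definition rhoF : FP V m := inl root.
Definition dd (a : FP V m) := pdist T (pt a).

Lemma pt1 a : (pt a).1 = match a with inl v => v | inr r => (x r).1 end.
Proof. by case: a => [v|r] //=; case: eqP => [->|]. Qed.

Lemma pt_valid a : valid_point T (pt a).
Proof.
case: a => [v|r] /=; last exact: Hvalid.
case: eqP => [_|vr]; first by left.
right; split => //=; split; [exact: tlen_pos | lra].
Qed.

Lemma pt_rho : pt rhoF = (root, 0).
Proof. by rewrite /= eqxx. Qed.

Lemma dd_rho : dd rhoF = 0.
Proof. by rewrite /dd pt_rho /pdist /= eqxx. Qed.

Lemma dd_x r : dd (inr r) = s.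
Proof. exact: Hdist. Qed.

Lemma pt_nonroot a : a != rhoF -> (pt a).1 <> root.
Proof.
rewrite pt1; case: a => [v|r] ar.
  by move=> E; move: ar; rewrite E eqxx.
move=> E; have := Hdist r; rewrite (valid_root (Hvalid r) E) /pdist /= eqxx; lra.
Qed.

Lemma pt_same a b : pt a = pt b -> a = b \/ tiebreak a b \/ tiebreak b a.
Proof.
case: a => [v|r]; case: b => [w|r'] E; try by right; first [by left | by right].
  by left; move: (f_equal fst E); rewrite !pt1 => ->.
by left; rewrite (Hinj E).
Qed.

Lemma ancP_refl (X : V * R) : ancP T X X.
Proof. right; left; split => //; lra. Qed.

Lemma fprecP a b : reflect (ancP T (pt a) (pt b) /\ (pt a <> pt b \/ tiebreak a b)) (fprec a b).
Proof.
rewrite /fprec; apply: (iffP andP) => [[/ancE H1 H2]|[H1 H2]]; split.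
- by [].
- by case/orP: H2 => [/pt_eqbP H|H]; [left|right].
- by apply/ancE.
- by case: H2 => [H|->]; [apply/orP; left; apply/pt_eqbP | rewrite orbT].
Qed.

Lemma tieb_asym a b : tiebreak a b -> tiebreak b a -> False.
Proof. by case: a; case: b. Qed.

Lemma fprec_irr a : ~~ fprec a a.
Proof. by apply/negP => /fprecP[_ [H|H]]; [apply: H | case: a H]. Qed.

Lemma fprec_trans a b c : fprec a b -> fprec b c -> fprec a c.
Proof.
move=> /fprecP[H1 H2] /fprecP[G1 G2]; apply/fprecP; split; first exact: ancP_trans H1 G1.
case: (pt_eqbP (pt a) (pt c)) => [E|NE]; last by left.
have E2 : pt a = pt b.
  apply: ancP_antisym (pt_valid _) (pt_valid _) H1 _; by rewrite E.
have T1 : tiebreak a b by case: H2.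
have T2 : tiebreak b c by case: G2 => // H; case: H; rewrite -E2.
move: T1 T2; case: b {E2 H1 H2 G1 G2} => [?|?] /=; last by [].
by case: (a) => [?|?].
Qed.

Lemma fprec_lin a a' b : fprec a b -> fprec a' b -> a = a' \/ fprec a a' \/ fprec a' a.
Proof.
move=> /fprecP[H1 _] /fprecP[G1 _].
case: (pt_eqbP (pt a) (pt a')) => [E|NE].
  case: (pt_same E) => [->|[T1|T1]]; first by left.
  - by right; left; apply/fprecP; split; [rewrite E; apply: ancP_refl | right].
  - by right; right; apply/fprecP; split; [rewrite E; apply: ancP_refl | right].
case: (ancP_lin H1 G1) => H.
  by right; left; apply/fprecP; split; [|left].
by right; right; apply/fprecP; split; [|left => E; apply: NE].
Qed.

Lemma fprec_rho a : a != rhoF -> fprec rhoF a.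
Proof.
move=> ar; apply/fprecP; split; first by left; rewrite pt_rho.
left => E; apply: (pt_nonroot ar); by rewrite -E pt_rho.
Qed.

Lemma fprec_dd a b : fprec a b -> dd a <= dd b.
Proof. by move=> /fprecP[H _]; apply: ancP_pdist (pt_valid _) (pt_valid _) H. Qed.

Lemma fprec_to_rho a : ~~ fprec a rhoF.
Proof.
apply/negP => H; case: (eqVneq a rhoF) => [E|ar].
  by move: H; rewrite E (negbTE (fprec_irr _)).
by have := fprec_trans H (fprec_rho ar); rewrite (negbTE (fprec_irr _)).
Qed.

Definition rk (b : FP V m) := #|[set a | fprec a b]|.

Lemma rk_lt a b : fprec a b -> (rk a < rk b)%nat.
Proof.
move=> Hab; apply: proper_card; apply/properP; split.
  by apply/subsetP => c; rewrite !inE => H; exact: fprec_trans H Hab.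
by exists a; rewrite inE ?Hab // fprec_irr.
Qed.

Definition parF (b : FP V m) : FP V m := if [pick a | fparent a b] is Some a then a else rhoF.

Lemma fparent_ex b : b != rhoF -> exists a, fparent a b.
Proof.
move=> br; have H0 : fprec rhoF b by exact: fprec_rho.
case: (@arg_maxnP (FP V m) rhoF (fun a => fprec a b) rk H0) => a Ha Hmax.
exists a; apply/andP; split => //; apply/forallP => c; apply/negP => /andP[Hac Hcb].
by have := leq_trans (rk_lt Hac) (Hmax c Hcb); rewrite ltnn.
Qed.

Lemma fparent_uniq a a' b : fparent a b -> fparent a' b -> a = a'.
Proof.
move=> /andP[Ha /forallP Na] /andP[Ha' /forallP Na'].
case: (fprec_lin Ha Ha') => [//|[H|H]].
  by have := Na a'; rewrite H Ha'.
by have := Na' a; rewrite H Ha.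
Qed.

Lemma fparent_rho a : fparent a rhoF = false.
Proof. by apply/negP => /andP[H _]; move: H; apply/negP; apply: fprec_to_rho. Qed.

Lemma parF_spec b : b != rhoF -> fparent (parF b) b.
Proof.
move=> br; rewrite /parF; case: pickP => [a //|H].
by have [a Ha] := fparent_ex br; move: (H a); rewrite Ha.
Qed.

Lemma parF_rho : parF rhoF = rhoF.
Proof. rewrite /parF; case: pickP => [a|//]; by rewrite fparent_rho. Qed.

Lemma fparentE a b : fparent a b = (b != rhoF) && (a == parF b).
Proof.
case: (eqVneq b rhoF) => [->|br]; first by rewrite fparent_rho.
apply/idP/eqP => [H|->]; last exact: parF_spec.
exact: fparent_uniq H (parF_spec br).
Qed.

Lemma rk_par b : b != rhoF -> (rk (parF b) < rk b)%nat.
Proof. by move/parF_spec/andP => [H _]; apply: rk_lt. Qed.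

Lemma dd_par b : b != rhoF -> dd (parF b) <= dd b.
Proof. by move/parF_spec/andP => [H _]; apply: fprec_dd. Qed.

Lemma chain_weight_eq (p : nat -> nat -> R -> R) (c : FP V m -> nat) :
  chain_weight T x p c = \big[Rmult/1]_(b | (b \in setT) && (b != rhoF))
       p (c (parF b)) (c b) (dd b - dd (parF b)).
Proof.
rewrite /chain_weight (reindex_onto (fun b => (parF b, b)) (fun ab => ab.2)); last first.
  by case=> a b /=; rewrite fparentE => /andP[_ /eqP ->].
apply: eq_big => [b|b _] /=; last by [].
by rewrite in_setT (fparentE (parF b) b) !eqxx !andbT.
Qed.

End FPsec.
Lemma exp_le x y : x <= y -> exp x <= exp y.
Proof. move=> H; case: (Req_dec x y) => [->|N]; first lra. apply: Rlt_le; apply: exp_increasing; lra. Qed.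

Lemma exp_pow x n : exp x ^ n = exp (INR n * x).
Proof.
elim: n => [|n IH]; first by rewrite /= Rmult_0_l exp_0.
change (exp x ^ n.+1) with (exp x * exp x ^ n).
by rewrite IH -exp_plus S_INR; congr exp; ring.
Qed.

Lemma exp_lb y : -(1/2) <= y -> exp (y - 2 * y ^ 2) <= 1 + y.
Proof.
move=> Hy.
have Hp : 0 < 1 + y by lra.
have H1 := exp_ineq1_le (- (y / (1 + y))).
have E : exp (y / (1 + y)) * exp (- (y / (1 + y))) = 1 by rewrite -exp_plus Rplus_opp_r exp_0.
have H2 : exp (y / (1 + y)) <= 1 + y.
  have Hx : 1 + - (y / (1 + y)) = / (1 + y) by field; lra.
  rewrite Hx in H1.
  have Hpos := exp_pos (y / (1 + y)).
  have H : exp (y / (1 + y)) * / (1 + y) <= exp (y / (1 + y)) * exp (- (y / (1 + y))).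
    by apply: Rmult_le_compat_l; lra.
  rewrite E in H; have := Rmult_le_compat_r (1 + y) _ _ (Rlt_le _ _ Hp) H.
  by rewrite Rmult_assoc Rinv_l; lra.
apply: Rle_trans H2; apply: exp_le.
have -> : y / (1 + y) = y - 2 * y ^ 2 + y ^ 2 * (1 + 2 * y) / (1 + y) by field; lra.
have : 0 <= y ^ 2 * (1 + 2 * y) / (1 + y).
  apply: Rmult_le_pos; last by apply: Rlt_le; apply: Rinv_0_lt_compat.
  apply: Rmult_le_pos; [ apply: pow2_ge_0 | lra].
lra.
Qed.

Lemma div_lt b a c : 0 < b -> a < c * b -> a / b < c.
Proof.
move=> b0 H; have := Rmult_lt_compat_r (/ b) _ _ (Rinv_0_lt_compat _ b0) H.
by have -> : c * b * / b = c by field; lra.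
Qed.
Lemma le_div b a c : 0 < b -> c * b <= a -> c <= a / b.
Proof.
move=> b0 H; have := Rmult_le_compat_r (/ b) _ _ (Rlt_le _ _ (Rinv_0_lt_compat _ b0)) H.
by have -> : c * b * / b = c by field; lra.
Qed.
Lemma div_le b a c : 0 < b -> a <= c * b -> a / b <= c.
Proof.
move=> b0 H; have := Rmult_le_compat_r (/ b) _ _ (Rlt_le _ _ (Rinv_0_lt_compat _ b0)) H.
by have -> : c * b * / b = c by field; lra.
Qed.
Lemma mul_of_div_lt a b c : 0 < b -> a / b < c -> a < c * b.
Proof.
move=> b0 H; have := Rmult_lt_compat_r b _ _ b0 H.
by have -> : a / b * b = a by field; lra.
Qed.

Section Markov.
Variables (p : nat -> nat -> R -> R) (q : nat -> nat -> R).
Hypotheses (Hp : is_transition_function p) (Hq : is_Q_matrix_of p q).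

Lemma pnn j k t : 0 <= t -> 0 <= p j k t.
Proof. by case: Hp => H _; apply: H. Qed.

Lemma psum_le1 j t n : 0 <= t -> \big[Rplus/0]_(k < n) p j k t <= 1.
Proof.
move=> t0; case: Hp => H0 [H1 _]; apply: (inf_sum_le (H1 j t t0)).
by move=> k; apply: H0.
Qed.

Lemma CKp a b s t n : 0 <= s -> 0 <= t ->
  \big[Rplus/0]_(k < n) (p a k s * p k b t) <= p a b (s + t).
Proof.
move=> s0 t0; case: Hp => H0 [_ [_ H3]]; apply: (inf_sum_le (H3 a b s t s0 t0)).
by move=> k; apply: Rmult_le_pos; apply: H0.
Qed.

Lemma p_le1 j k t : 0 <= t -> p j k t <= 1.
Proof.
move=> t0; apply: (Rle_trans _ _ _ _ (psum_le1 j k.+1 t0)).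
rewrite big_ord_recr /=; set S := \big[Rplus/0]_(_ < _) _.
have : 0 <= S by apply: sumR_ge0 => l _; apply: pnn.
lra.
Qed.

Lemma p_mul_le a s t : 0 <= s -> 0 <= t -> p a a s * p a a t <= p a a (s + t).
Proof.
move=> s0 t0; apply: (Rle_trans _ _ _ _ (CKp a a a.+1 s0 t0)).
rewrite big_ord_recr /=; set S := \big[Rplus/0]_(_ < _) _.
have : 0 <= S by apply: sumR_ge0 => l _; apply: Rmult_le_pos; apply: pnn.
lra.
Qed.

Lemma p_kron j k : p j k 0 = kron j k.
Proof. by case: Hp => _ [_ [H _]]. Qed.

Variable i : nat.
Local Notation u t := (p i i t).

Lemma u_pow n h : 0 <= h -> u h ^ n <= u (INR n * h).
Proof.
move=> h0; elim: n => [|n IH].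
  by rewrite /= Rmult_0_l p_kron /kron eqxx; lra.
rewrite S_INR Rmult_plus_distr_r Rmult_1_l /=.
have hn : 0 <= INR n * h by apply: Rmult_le_pos => //; apply: pos_INR.
apply: (Rle_trans _ _ _ _ (p_mul_le _ hn h0)).
rewrite Rmult_comm; apply: Rmult_le_compat_r => //; exact: pnn.
Qed.

Lemma u_lin e : 0 < e -> exists dl, 0 < dl /\ forall h, 0 < h -> h < dl -> 1 + (q i i - e) * h <= u h.
Proof.
move=> e0; have [dl [dl0 H]] := Hq i i e0; exists dl; split => // h h0 hd.
have := H h h0 hd; rewrite /kron eqxx => /Rabs_def2 [_ H2].
have : q i i - e < (u h - 1) / h by lra.
move=> H3; have := Rmult_lt_compat_r h _ _ h0 H3.
rewrite /Rdiv Rmult_assoc Rinv_l; lra.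
Qed.

Lemma u_ge_exp s : 0 < s -> exp (q i i * s) <= u s.
Proof.
move=> s0.
set E := exp (q i i * s).
have E0 : 0 < E by apply: exp_pos.
suff H : forall th, 0 < th -> th < 1 -> E * (1 - th) <= u s.
  apply: Rnot_lt_le => Hlt.
  pose th := (E - u s) / (2 * E).
  have th0 : 0 < th by apply: Rdiv_lt_0_compat; lra.
  have th1 : th < 1.
    have : 0 <= u s by apply: pnn; lra.
    move=> us0; rewrite /th; apply: div_lt; lra.
  have := H th th0 th1; rewrite /th; move=> H'.
  have : E * (1 - (E - u s) / (2 * E)) = (E + u s) / 2 by field; lra.
  lra.
move=> th th0 th1.
pose et := th / (2 * s).
have et0 : 0 < et by apply: Rdiv_lt_0_compat; lra.
pose a := (q i i - et) * s.
have [dl [dl0 Hdl]] := u_lin et0.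
have [n Hn] := INR_unbounded (s / dl + 2 * Rabs a + 4 * a ^ 2 / th + 1).
have Hsd : 0 <= s / dl by apply: Rlt_le; apply: Rdiv_lt_0_compat.
have Ha2 : 0 <= 4 * a ^ 2 / th by apply: Rmult_le_pos; [have := pow2_ge_0 a; lra | apply: Rlt_le; apply: Rinv_0_lt_compat].
have Habs := Rabs_pos a.
have n0 : 0 < INR n by lra.
pose h := s / INR n.
have h0 : 0 < h by apply: Rdiv_lt_0_compat.
have hd : h < dl.
  rewrite /h; apply: div_lt => //.
  have : s / dl < INR n by lra.
  move/(mul_of_div_lt dl0); lra.
pose y := a / INR n.
have Hy : - (1/2) <= y.
  rewrite /y; apply: le_div => //.
  case: (Rle_dec 0 a) => Ha; first nra.
  move: Hn Habs; rewrite Rabs_left; lra.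
have Huh : 1 + y <= u h.
  have := Hdl h h0 hd; rewrite /y /h /a; have -> : (q i i - et) * s / INR n = (q i i - et) * (s / INR n) by field; lra.
  done.
have Hus : u h ^ n <= u s.
  have := u_pow n (Rlt_le _ _ h0); rewrite /h; have -> : INR n * (s / INR n) = s by field; lra.
  done.
have Hexp : exp (y - 2 * y ^ 2) ^ n <= u h ^ n.
  apply: pow_incr; split; first by apply: Rlt_le; apply: exp_pos.
  apply: Rle_trans Huh; exact: exp_lb.
rewrite exp_pow in Hexp.
have Hex : INR n * (y - 2 * y ^ 2) = a - 2 * a ^ 2 / INR n by rewrite /y; field; lra.
rewrite Hex in Hexp.
have Hsmall : 2 * a ^ 2 / INR n <= th / 2.
  apply: div_le => //.
  have : 4 * a ^ 2 / th < INR n by lra.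
  move/(mul_of_div_lt th0); lra.
have Hlow : q i i * s - th <= a - 2 * a ^ 2 / INR n.
  have Ha : a = q i i * s - th / 2 by rewrite /a /et; field; lra.
  lra.
have := exp_le Hlow; rewrite /Rminus exp_plus -/E => Hl.
have Hth : 1 - th <= exp (- th) by have := exp_ineq1_le (- th); lra.
apply: Rle_trans Hus; apply: Rle_trans Hexp; apply: Rle_trans Hl.
apply: Rmult_le_compat_l; lra.
Qed.
End Markov.

Lemma INR_card (I : finType) (P : pred I) :
  INR #|P| = \big[Rplus/0]_(r : I) (if P r then 1 else 0).
Proof.
rewrite -sum1_card (big_morph INR (id1 := 0) (op1 := Rplus) (id2 := 0%nat) (fun a b => plus_INR a b) (erefl _)).
by rewrite big_mkcond; apply: eq_bigr => r _; rewrite unfold_in; case: (P r).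
Qed.

Lemma sum_const_R n a : \big[Rplus/0]_(r < n) a = INR n * a.
Proof.
elim: n => [|n IH]; first by rewrite big_ord0 /=; ring.
by rewrite big_ord_recr IH S_INR /=; ring.
Qed.

Lemma bernoulli x k : 0 <= x <= 1 -> 1 - INR k * x <= (1 - x) ^ k.
Proof.
move=> Hx; elim: k => [|k IH]; first by rewrite /=; lra.
change ((1 - x) ^ k.+1) with ((1 - x) * (1 - x) ^ k).
rewrite S_INR.
have H0 : 0 <= (1 - x) ^ k by apply: pow_le; lra.
have Hk := pos_INR k.
case: (Rle_dec 0 (1 - INR k * x)) => H.
  have := Rmult_le_compat_l (1 - x) _ _ (ltac:(lra)) IH; nra.
nra.
Qed.

Lemma aux_ineq a b S S' : S <= S' -> b + S' <= 1 -> a + S - a <= 1 - b.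
Proof. lra. Qed.

Section Main.
Variables (p : nat -> nat -> R -> R) (q : nat -> nat -> R).
Hypotheses (Hp : is_transition_function p) (Hq : is_Q_matrix_of p q).
Variables (V : finType) (T : tree V) (s : R) (m : nat) (x : 'I_m -> V * R).
Hypotheses (Hs : 0 < s) (Hvalid : forall r, valid_point T (x r))
  (Hinj : injective x) (Hdist : forall r, pdist T (x r) = s).
Variable (i : nat).

Local Notation A := (FP V m).
Local Notation rho := (rhoF T m).
Local Notation pi := (parF T x).
Local Notation d := (dd T x).

Let Hpirho : pi rho = rho := parF_rho Hs Hvalid Hdist.
Let Hrank : forall b, b != rho -> (rk T x (pi b) < rk T x b)%nat := fun b => @rk_par _ _ _ _ _ Hs Hvalid Hdist b.
Let p0 : forall j k t, 0 <= t -> 0 <= p j k t := pnn Hp.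
Let Hd : forall b, b != rho -> d (pi b) <= d b := fun b => @dd_par _ _ _ _ _ Hs Hvalid Hdist b.
Let psum1 := psum_le1 Hp.
Let CK := CKp Hp.
Let dr0 : d rho = 0 := dd_rho T x.

Local Notation Sg o B phi := (Sig rho pi p d i o setT B phi).

Lemma psum_Sig N (o : 'I_N) (f : ('I_m -> nat) -> R) :
  chain_psum T x p i N f = Sg o (fun _ => N) (fun c => f (fun r => c (inr r))).
Proof.
rewrite /chain_psum /Sig; apply: eq_big => c.
  apply/idP/idP => [H|/and3P[H _ _] //]; apply/and3P; split => //; apply/forallP => a.
    by rewrite ltn_ord implybT.
  by rewrite in_setT.
by move=> _; rewrite (chain_weight_eq Hs Hvalid Hinj Hdist).
Qed.

Lemma psum0 N f : (N <= i)%nat -> chain_psum T x p i N f = 0.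
Proof.
move=> Ni; rewrite /chain_psum big_pred0 // => c; apply/negbTE/eqP => E.
by have := ltn_ord (c (inl (troot T))); rewrite E ltnNge Ni.
Qed.

Lemma Sig_add N (o : 'I_N) B phi psi :
  Sg o B (fun c => phi c + psi c) = Sg o B phi + Sg o B psi.
Proof. by rewrite /Sig -big_split; apply: eq_bigr => c _ /=; ring. Qed.

Lemma Sig_sum N (o : 'I_N) B (I : finType) (F : I -> {ffun A -> 'I_N} -> R) :
  Sg o B (fun c => \big[Rplus/0]_(r : I) F r c) = \big[Rplus/0]_(r : I) Sg o B (F r).
Proof.
rewrite /Sig; under eq_bigr do rewrite big_distrr; by rewrite exchange_big.
Qed.

Lemma Sig_ge0 N (o : 'I_N) B phi : (forall c, 0 <= phi c) -> 0 <= Sg o B phi.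
Proof. move=> H; apply: sumR_ge0 => c _; apply: Rmult_le_pos => //; exact: W_ge0. Qed.

Lemma mass_up N (o : 'I_N) : Sg o (fun _ => N) (fun _ => 1) <= 1.
Proof.
have H := mass_le Hpirho Hrank p0 Hd i o psum1 (n := #|(setT : {set A})|) (U := setT) (fun _ => N).
apply: H; [exact: leqnn | by rewrite in_setT | by move=> b]. Qed.

Definition ind (N : nat) (z : A) (j : nat) (c : {ffun A -> 'I_N}) : R := if nat_of_ord (c z) == j then 1 else 0.

Lemma marg_up N (o : 'I_N) r j : Sg o (fun _ => N) (ind (inr r) j) <= p i j s.
Proof.
have -> : Sg o (fun _ => N) (ind (inr r) j) = Sg o (fun _ => N) (fun c => p (c (inr r)) j 0).
  by rewrite /Sig; apply: eq_bigr => c _; rewrite (p_kron Hp) /kron /ind.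
have := marg_le Hpirho Hrank p0 Hd i o psum1 dr0 CK (n := #|(setT : {set A})|) (U := setT) (fun _ => N) j (z := inr r) (t := 0).
rewrite (dd_x Hdist) Rplus_0_r; apply => //. all: try by rewrite in_setT. all: try by move=> b. all: try lra.
Qed.

Lemma ind_sum N (z : A) (c : {ffun A -> 'I_N}) : \big[Rplus/0]_(j : 'I_N) ind z j c = 1.
Proof.
rewrite (bigD1 (c z)) //= /ind eqxx big1 => [|j /negbTE H]; first lra.
by rewrite eq_sym -(inj_eq val_inj) /= in H; rewrite H.
Qed.

Lemma mass_split N (o : 'I_N) (io : 'I_N) r : nat_of_ord io = i ->
  Sg o (fun _ => N) (fun _ => 1) - Sg o (fun _ => N) (ind (inr r) i) <= 1 - p i i s.
Proof.
move=> Hio.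
have E : Sg o (fun _ => N) (fun _ => 1) = \big[Rplus/0]_(j : 'I_N) Sg o (fun _ => N) (ind (inr r) j).
  rewrite -Sig_sum; by rewrite /Sig; apply: eq_bigr => c _; rewrite ind_sum.
rewrite E (bigD1 io) //= Hio.
have H1 : \big[Rplus/0]_(j < N | j != io) Sg o (fun _ => N) (ind (inr r) j)
       <= \big[Rplus/0]_(j < N | j != io) p i j s.
  by apply: sumR_le => j _; apply: marg_up.
have H2 : \big[Rplus/0]_(j < N) p i j s <= 1 by apply: psum1; lra.
rewrite (bigD1 io) //= Hio in H2.
exact: (aux_ineq _ H1 H2).
Qed.


Lemma mass_lower e : 0 < e -> exists N0 : nat, forall N (o : 'I_N), (N0 <= N)%nat -> (i < N)%nat ->
  1 - e <= Sg o (fun _ => N) (fun _ => 1).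
Proof.
move=> e0.
case: (Rle_dec 1 e) => He1.
  exists 0%nat => N o _ _; have := @Sig_ge0 N o (fun _ => N) (fun _ => 1) (fun _ => Rle_0_1); lra.
set n := #|(setT : {set A})|.
have Hn := pos_INR n.
pose e' := e / (INR n + 1).
have e'0 : 0 < e' by apply: Rdiv_lt_0_compat; lra.
have Hee : e' * (INR n + 1) = e by rewrite /e'; field; lra.
have e'1 : e' <= 1 by nra.
have Hlim : forall (b : A) (j : nat), exists n0 : nat, b != rho -> forall n' : nat, (n0 <= n')%nat ->
    1 - e' <= \big[Rplus/0]_(k < n') K pi p d b j k.
  move=> b j; case: (eqVneq b rho) => [_|br]; first by exists 0%nat.
  have t0 : 0 <= d b - d (pi b) by have := Hd br; lra.
  case: Hp => _ [H1 _].
  have [n0 Hn0] := inf_sum_lim (H1 j _ t0) e'0.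
  by exists n0 => _ n' Hn'; apply: Hn0.
pose N0f b j := proj1_sig (constructive_indefinite_description _ (Hlim b j)).
have N0fP : forall b j, b != rho -> forall n' : nat, (N0f b j <= n')%nat ->
    1 - e' <= \big[Rplus/0]_(k < n') K pi p d b j k.
  by move=> b j; rewrite /N0f; case: constructive_indefinite_description.
pose g (M : nat) := \max_(b : A) \max_(j < M) N0f b j.
pose Bs (r : nat) := iter r (fun M => maxn M (g M)) i.+1.
have BsS : forall r, Bs r.+1 = maxn (Bs r) (g (Bs r)) by [].
have Bs_mono : forall r k, (Bs r <= Bs (k + r))%nat.
  move=> r; elim=> [//|k IH]; rewrite addSn BsS; exact: leq_trans IH (leq_maxl _ _).
have Bs0 : forall r, (i < Bs r)%nat by move=> r; have := Bs_mono 0%nat r; rewrite addn0.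
pose B (a : A) := Bs (rk T x a).
exists (\max_(a : A) B a) => N o HN iN.
have BN : forall a, (B a <= N)%nat by move=> a; apply: leq_trans HN; exact: leq_bigmax.
have HB : forall b, b != rho -> forall j, (j < B (pi b))%nat ->
    1 - e' <= \big[Rplus/0]_(k < N | (k < B b)%nat) K pi p d b j k.
  move=> b br j Hj.
  have Hr := Hrank br.
  have [r' Er'] : exists r', rk T x b = r'.+1 by case: (rk T x b) Hr => // r' _; exists r'.
  have Hjr : (j < Bs r')%nat.
    apply: leq_trans Hj _; rewrite /B.
    have Hle : (rk T x (pi b) <= r')%nat by rewrite -ltnS -Er'.
    by rewrite -(subnK Hle); apply: Bs_mono.
  have HN0 : (N0f b j <= B b)%nat.
    rewrite /B Er' BsS; apply: leq_trans (leq_maxr _ _).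
    apply: leq_trans (leq_bigmax b).
    exact: (leq_bigmax (F := fun j0 : 'I_(Bs r') => N0f b j0) (Ordinal Hjr)).
  rewrite -(big_ord_widen _ (fun k => K pi p d b j k) (BN b)).
  exact: N0fP.
have iB : (i < B rho)%nat by apply: Bs0.
have Hm := mass_ge Hpirho Hrank p0 Hd o (n := n) (U := setT) (B := B) (e := e')
   (leqnn _) (ltac:(by rewrite in_setT)) (fun b _ => ltac:(by rewrite in_setT)) (ltac:(lra)) iN iB HB.
have Hsub : Sg o B (fun _ => 1) <= Sg o (fun _ => N) (fun _ => 1).
  apply: sumR_sub => [c _|c /and3P[H1 _ H3]].
    by apply: Rmult_le_pos; [exact: W_ge0 | lra].
  apply/and3P; split => //; apply/forallP => a; by rewrite ltn_ord implybT.
have Hber := bernoulli (n - 1) (ltac:(lra) : 0 <= e' <= 1).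
have Hn1 : INR (n - 1) <= INR n by apply: le_INR; apply/leP; exact: leq_subr.
have : INR (n - 1) * e' <= INR n * e' by apply: Rmult_le_compat_r; lra.
move=> H; rewrite -/n in Hm; nra.
Qed.

Lemma Sig_lin N (o : 'I_N) B al be phi psi :
  Sg o B (fun c => al * phi c + be * psi c) = al * Sg o B phi + be * Sg o B psi.
Proof. by rewrite Sig_add Sig_scale Sig_scale. Qed.

Lemma count_ind N (c : {ffun A -> 'I_N}) :
  INR (count_state i (fun r => nat_of_ord (c (inr r)))) = \big[Rplus/0]_(r : 'I_m) ind (inr r) i c.
Proof. by rewrite /count_state INR_card; apply: eq_bigr => r _; rewrite /ind. Qed.

Lemma count_bd N (c : {ffun A -> 'I_N}) :
  0 <= INR (count_state i (fun r => nat_of_ord (c (inr r)))) <= INR m.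
Proof.
split; first exact: pos_INR.
apply: le_INR; apply/leP; rewrite /count_state.
by apply: leq_trans (max_card _) _; rewrite card_ord.
Qed.

Lemma psum_count N (o : 'I_N) :
  chain_psum T x p i N (fun y => INR (count_state i y)) =
  \big[Rplus/0]_(r : 'I_m) Sg o (fun _ => N) (ind (inr r) i).
Proof.
rewrite (psum_Sig o) -Sig_sum; rewrite /Sig; apply: eq_bigr => c _.
by rewrite count_ind.
Qed.

Lemma ind_le1 N (z : A) j (c : {ffun A -> 'I_N}) : 0 <= ind z j c <= 1.
Proof. rewrite /ind; case: eqP => _; lra. Qed.

Lemma Er_le_Z N (o : 'I_N) r : Sg o (fun _ => N) (ind (inr r) i) <= Sg o (fun _ => N) (fun _ => 1).
Proof. apply: (Sig_le p0 Hd) => c _; have := ind_le1 (inr r) i c; lra. Qed.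

Lemma pii_bounds : 0 <= p i i s <= 1.
Proof. split; [apply: p0; lra | apply: (p_le1 Hp); lra]. Qed.

Lemma part1 : chain_expect_is T x p i (fun y => INR (count_state i y)) (p i i s * INR m).
Proof.
have [pp0 pp1] := pii_bounds.
have Hm := pos_INR m.
have Hub : forall N, chain_psum T x p i N (fun y => INR (count_state i y)) <= p i i s * INR m.
  move=> N; case: (leqP N i) => Ni.
    by rewrite psum0 //; apply: Rmult_le_pos.
  rewrite (psum_count (Ordinal Ni)).
  apply: (Rle_trans _ (\big[Rplus/0]_(r : 'I_m) p i i s)).
    by apply: sumR_le => r _; apply: marg_up.
  by rewrite sum_const_R; lra.
split; first by move=> y [N ->].
move=> b Hb.
have b0 : 0 <= b by apply: Hb; exists 0%nat; rewrite psum0.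
apply: Rnot_lt_le => Hlt.
have m0 : 0 < INR m by case: (Req_dec (INR m) 0) => E; [rewrite E Rmult_0_r in Hlt; lra | lra].
pose e := (p i i s * INR m - b) / (2 * INR m).
have e0 : 0 < e by apply: Rdiv_lt_0_compat; lra.
have Hem : e * INR m = (p i i s * INR m - b) / 2 by rewrite /e; field; lra.
have [N0 HN0] := mass_lower e0.
have iN : (i < maxn N0 i.+1)%nat by rewrite leq_max leqnn orbT.
pose o := Ordinal iN.
have Hy := Hb _ (ex_intro _ (maxn N0 i.+1) erefl).
rewrite (psum_count o) in Hy.
have HZ := HN0 _ o (leq_maxl _ _) iN.
have Hlow : \big[Rplus/0]_(r : 'I_m) (p i i s - e) <=
            \big[Rplus/0]_(r : 'I_m) Sg o (fun _ => maxn N0 i.+1) (ind (inr r) i).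
  apply: sumR_le => r _.
  have := mass_split o (io := o) r erefl; lra.
rewrite sum_const_R in Hlow.
have : INR m * (p i i s - e) = p i i s * INR m - e * INR m by ring.
lra.
Qed.

Lemma point_bound M pp dl a : 0 < M -> 0 <= pp <= 1 -> 0 < dl -> 0 <= a <= M ->
  indicR (Rlt_dec (dl * M) (Rabs (a - pp * M))) <=
  / (dl * M) ^ 2 * (M * (1 - 2 * (1 - pp)) * (M - a) + (1 - pp) ^ 2 * M ^ 2).
Proof.
move=> M0 Hpp dl0 Ha.
set N1 := M * (1 - 2 * (1 - pp)) * (M - a) + (1 - pp) ^ 2 * M ^ 2.
have HN1 : (a - pp * M) ^ 2 <= N1.
  rewrite /N1; have : (M - a) ^ 2 <= M * (M - a) by nra.
  nra.
have dM : 0 < dl * M by nra.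
have c0 : 0 < / (dl * M) ^ 2 by apply: Rinv_0_lt_compat; nra.
have Hc : / (dl * M) ^ 2 * (dl * M) ^ 2 = 1 by field; lra.
rewrite /indicR; case: Rlt_dec => H.
  have Hsq : (dl * M) ^ 2 < (a - pp * M) ^ 2.
    rewrite -(pow2_abs (a - pp * M)); have := Rabs_pos (a - pp * M); nra.
  have := Rmult_le_compat_l _ _ _ (Rlt_le _ _ c0) (ltac:(lra) : (dl * M) ^ 2 <= N1).
  cbv [is_left]; lra.
cbv [is_left]; apply: Rmult_le_pos; first lra.
have := pow2_ge_0 (a - pp * M); lra.
Qed.

Lemma part2 delta : 0 < delta -> forall N,
  chain_psum T x p i N (fun y => indicR (Rlt_dec (delta * INR m)
          (Rabs (INR (count_state i y) - p i i s * INR m))))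
  <= (1 - exp (- (- q i i) * s)) / (delta ^ 2).
Proof.
move=> dl0 N.
have [pp0 pp1] := pii_bounds.
have Hexp : exp (q i i * s) <= p i i s by apply: (u_ge_exp Hp Hq).
rewrite Ropp_involutive.
have d20 : 0 < delta ^ 2 by apply: pow_lt.
have Rpos : 0 <= (1 - exp (q i i * s)) / delta ^ 2.
  apply: Rmult_le_pos; [lra | apply: Rlt_le; apply: Rinv_0_lt_compat; lra].
case: (leqP N i) => Ni; first by rewrite psum0.
pose o := Ordinal Ni.
rewrite (psum_Sig o).
set M := INR m; set pp := p i i s; set qq := 1 - pp.
set Z := Sg o (fun _ => N) (fun _ => 1).
have HZ : 0 <= Z <= 1 by split; [apply: Sig_ge0 => _; lra | exact: mass_up].
case: (Req_dec M 0) => M0.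
  apply: (Rle_trans _ (Sg o (fun _ => N) (fun _ => 0 * 1))).
    apply: (Sig_le p0 Hd) => c _.
    have := count_bd c; rewrite -/M M0.
    set a0 := INR (count_state _ _) => Hc.
    have -> : a0 = 0 by lra.
    rewrite /indicR; case: Rlt_dec => H; cbv [is_left]; last lra.
    have E0 : 0 - pp * 0 = 0 by ring.
    by move: H; rewrite E0 Rabs_R0; lra.
  by rewrite Sig_scale Rmult_0_l.
have Mpos : 0 < M by have := pos_INR m; rewrite -/M; lra.
set c0 := / (delta * M) ^ 2.
pose a (c : {ffun A -> 'I_N}) := INR (count_state i (fun r => nat_of_ord (c (inr r)))).
apply: (Rle_trans _ (Sg o (fun _ => N) (fun c => c0 * (M * (1 - 2 * qq)) * (M * 1 + (-1) * a c) + c0 * ((qq ^ 2) * M ^ 2) * 1))).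
  apply: (Sig_le p0 Hd) => c _.
  have := point_bound Mpos (conj pp0 pp1) dl0 (count_bd c).
  rewrite -/M -/pp -/qq -/c0 -/(a c) => H; apply: (Rle_trans _ _ _ H); right; ring.
rewrite Sig_lin Sig_lin -/Z.
have HA : Sg o (fun _ => N) a = \big[Rplus/0]_(r : 'I_m) Sg o (fun _ => N) (ind (inr r) i).
  rewrite -Sig_sum /Sig; apply: eq_bigr => c _; by rewrite /a count_ind.
rewrite HA.
set X := M * Z + -1 * \big[Rplus/0]_(r : 'I_m) Sg o (fun _ => N) (ind (inr r) i).
have HX : X = \big[Rplus/0]_(r : 'I_m) (Z - Sg o (fun _ => N) (ind (inr r) i)).
  rewrite /X /M -sum_const_R /Rminus big_split /=.
  rewrite -(big_morph Ropp (id1 := 0) (op1 := Rplus) Ropp_plus_distr Ropp_0).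
  ring.
have HX0 : 0 <= X by rewrite HX; apply: sumR_ge0 => r _; have := Er_le_Z o r; rewrite -/Z; lra.
have HXq : X <= M * qq.
  rewrite HX /M -sum_const_R; apply: sumR_le => r _.
  have := mass_split o (io := o) r erefl; rewrite -/Z -/pp -/qq; lra.
have qq01 : 0 <= qq <= 1 by rewrite /qq /pp; lra.
have Hnum : M * (1 - 2 * qq) * X + qq ^ 2 * M ^ 2 * Z <= M ^ 2 * qq.
  case: (Rle_dec 0 (1 - 2 * qq)) => Hs2.
    have : M * (1 - 2 * qq) * X <= M * (1 - 2 * qq) * (M * qq) by apply: Rmult_le_compat_l; nra.
    have : qq ^ 2 * M ^ 2 * Z <= qq ^ 2 * M ^ 2 by have := pow2_ge_0 (qq * M); nra.
    have : M ^ 2 * qq * qq >= 0 by have := pow2_ge_0 M; nra.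
    nra.
  have MX : 0 <= M * X by apply: Rmult_le_pos; lra.
  have : M * (1 - 2 * qq) * X <= 0.
    have -> : M * (1 - 2 * qq) * X = (M * X) * (1 - 2 * qq) by ring.
    nra.
  have : qq ^ 2 * M ^ 2 * Z <= qq ^ 2 * M ^ 2 by have := pow2_ge_0 (qq * M); nra.
  have : qq ^ 2 * M ^ 2 <= qq * M ^ 2 by have := pow2_ge_0 M; nra.
  lra.
have c00 : 0 < c0 by apply: Rinv_0_lt_compat; have := pow_lt (delta * M) 2 (ltac:(nra)); lra.
have Hc0 : c0 * (M ^ 2 * qq) = qq / delta ^ 2 by rewrite /c0; field; lra.
have := Rmult_le_compat_l _ _ _ (Rlt_le _ _ c00) Hnum.
have Hq2 : qq / delta ^ 2 <= (1 - exp (q i i * s)) / delta ^ 2.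
  apply: Rmult_le_compat_r; [apply: Rlt_le; apply: Rinv_0_lt_compat; lra | rewrite /qq /pp; lra].
move=> H.
have E : c0 * (M * (1 - 2 * qq)) * X + c0 * (qq ^ 2 * M ^ 2) * Z = c0 * (M * (1 - 2 * qq) * X + qq ^ 2 * M ^ 2 * Z) by ring.
rewrite E; lra.
Qed.

End Main.

Close Scope R_scope.

Theorem mainTheorem9
  (p : nat -> nat -> R -> R) (q : nat -> nat -> R)
  (Hp : is_transition_function p) (Hq : is_Q_matrix_of p q)
  (Hsc : stable_conservative q)
  (V : finType) (T : tree V) (s : R) (m : nat) (x : 'I_m -> V * R)
  (Hs : (0 < s)%R)
  (Hvalid : forall r, valid_point T (x r))
  (Hdistinct : injective x)
  (Hdist : forall r, pdist T (x r) = s)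
  (i : nat) :
  chain_expect_is T x p i (fun y => INR (count_state i y)) (p i i s * INR m)%R /\
  (forall delta : R, (0 < delta)%R ->
     forall N : nat,
       (chain_psum T x p i N
          (fun y => indicR
             (Rlt_dec (delta * INR m)
                      (Rabs (INR (count_state i y) - p i i s * INR m))))
        <= (1 - exp (- (- q i i) * s)) / (delta ^ 2))%R).
Proof.
split.
  exact: (part1 Hp Hs Hvalid Hdistinct Hdist i).
move=> delta dl0 N; exact: (part2 Hp Hq Hs Hvalid Hdistinct Hdist i dl0 N).
Qed.
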